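(* Let $T\subseteq\mathcal T_d$ be any subregion and let $U$ be the monomial subregion of $T$ associated to a monomial $x^ay^bz^c$ of degree less than $d$. If $U$ is tileable by lozenges, then $T$ is tileable if and only if $T\setminus U$ is tileable. Moreover, each lozenge tiling of $T$ is obtained by combining a lozenge tiling of $T\setminus U$ and a lozenge tiling of $U$.
   Context: For $d\ge1$, $\mathcal T_d$ is an equilateral triangle of side length $d$ (horizontal bottom side) subdivided into unit triangles, upward ones labeled by the degree $d-1$ monomials of $K[x,y,z]$ and downward ones by degree $d-2$ monomials: $x^{d-1}$ at the top, $y^{d-1}$ bottom-left, $z^{d-1}$ bottom-right, and an upward triangle sharing an edge with a downward one has label equal to the downward label times a variable. A subregion is a set of these unit triangles. The monomial subregion of $T$ associated to a monomial $m$ of degree $<d$ is the set of unit triangles of $T$ whose labels are divisible by $m$ (i.e., the part of $T$ inside the upward triangle located $a$ units from the bottom edge, $b$ from the upper-right edge and $c$ from the upper-left edge when $m=x^ay^bz^c$). A lozenge is a union of two unit triangles sharing an edge; a region is tileable if it is empty or some set of lozenges covers each of its unit triangles exactly once. *)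

(* Defs.v *)
From mathcomp Require Import all_boot.
Set Implicit Arguments. Unset Strict Implicit. Unset Printing Implicit Defensive.

(* A unit triangle of T_d: orientation (true = upward, false = downward)
   and the exponent triple (a,b,c) of its label x^a y^b z^c. *)
Definition tri (d : nat) := (bool * ('I_d * 'I_d * 'I_d))%type.

Definition ea d (t : tri d) : nat := t.2.1.1.
Definition eb d (t : tri d) : nat := t.2.1.2.
Definition ec d (t : tri d) : nat := t.2.2.

(* valid unit triangle of T_d: upward labels have degree d-1,
   downward labels degree d-2 (stated without truncated subtraction). *)
Definition is_tri d (t : tri d) : bool :=
  if t.1 then ea t + eb t + ec t + 1 == d
  else ea t + eb t + ec t + 2 == d.

Definition Td d : {set tri d} := [set t | is_tri t].

(* u is upward, w is downward, and they share an edge: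
   label(u) = label(w) * (x, y or z). *)
Definition adjacent d (u w : tri d) : bool :=
  [&& is_tri u, is_tri w, u.1, ~~ w.1 &
   [|| [&& ea u == (ea w).+1, eb u == eb w & ec u == ec w],
       [&& ea u == ea w, eb u == (eb w).+1 & ec u == ec w]
     | [&& ea u == ea w, eb u == eb w & ec u == (ec w).+1]]].

(* A lozenge is encoded as the pair (upward triangle, downward triangle). *)
Definition lozenge d := (tri d * tri d)%type.

Definition tiling d (R : {set tri d}) (L : {set lozenge d}) : Prop :=
  (forall p, p \in L -> [/\ adjacent p.1 p.2, p.1 \in R & p.2 \in R]) /\
  (forall t, t \in R -> #|[set p in L | (p.1 == t) || (p.2 == t)]| = 1).

(* tileable: empty or admits a lozenge tiling (empty case covered by L = set0). *)
Definition tileable d (R : {set tri d}) : Prop := exists L, tiling R L.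

Definition monomial_subregion d (T : {set tri d}) (a b c : nat) : {set tri d} :=
  [set t in T | [&& a <= ea t, b <= eb t & c <= ec t]].

(* Main.v *)
Require Import Defs.
From mathcomp Require Import all_boot.
From mathcomp Require Import zify.
Set Implicit Arguments. Unset Strict Implicit.
Lemma and3_1 (A B C : Prop) : [/\ A, B & C] -> A. Proof. by case. Qed.

Lemma tile_uniq d (R : {set tri d}) (L : {set lozenge d}) t p q :
  tiling R L -> t \in R -> p \in L -> q \in L ->
  (p.1 == t) || (p.2 == t) -> (q.1 == t) || (q.2 == t) -> p = q.
Proof.
move=> [_ H] tR pL qL hp hq.
have [x hx] := cards1P (introT eqP (H t tR)).
have : p \in [set p in L | (p.1 == t) || (p.2 == t)] by rewrite inE pL hp.
have : q \in [set p in L | (p.1 == t) || (p.2 == t)] by rewrite inE qL hq.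
by rewrite hx !inE => /eqP -> /eqP ->.
Qed.

Lemma tile_ex d (R : {set tri d}) (L : {set lozenge d}) t :
  tiling R L -> t \in R -> exists2 p, p \in L & (p.1 == t) || (p.2 == t).
Proof.
move=> [_ H] tR.
have : 0 < #|[set p in L | (p.1 == t) || (p.2 == t)]| by rewrite H.
rewrite card_gt0 => /set0Pn [p]; rewrite inE => /andP [pL hp].
by exists p.
Qed.

Lemma adj_dir d (u w : tri d) : adjacent u w -> u.1 /\ ~~ w.1.
Proof. by move=> /and5P [_ _ -> -> _]. Qed.

Lemma count_eq d (R : {set tri d}) (L : {set lozenge d}) :
  tiling R L -> #|[set t in R | t.1]| = #|[set t in R | ~~ t.1]|.
Proof.
move=> tl; have [H1 _] := tl.
have e1 : [set t in R | t.1] = (fun p : lozenge d => p.1) @: L.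
  apply/setP => t; rewrite inE; apply/idP/imsetP.
    move=> /andP [tR t1]; have [p pL hp] := tile_ex tl tR.
    exists p => //; case/orP: hp => /eqP e //.
    have [_ w2] := adj_dir (and3_1 (H1 p pL)); by move: w2; rewrite e t1.
  move=> [p pL ->]; have [a1 a2 _] := H1 p pL; by rewrite a2 (adj_dir a1).1.
have e2 : [set t in R | ~~ t.1] = (fun p : lozenge d => p.2) @: L.
  apply/setP => t; rewrite inE; apply/idP/imsetP.
    move=> /andP [tR t1]; have [p pL hp] := tile_ex tl tR.
    exists p => //; case/orP: hp => /eqP e //.
    have [w2 _] := adj_dir (and3_1 (H1 p pL)); by move: w2 t1; rewrite e => ->.
  move=> [p pL ->]; have [a1 _ a3] := H1 p pL; by rewrite a3 (adj_dir a1).2.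
rewrite e1 e2 !card_in_imset //.
  move=> p q pL qL e; apply: (tile_uniq tl _ pL qL (t := p.2)).
  - by have [] := H1 p pL.
  - by rewrite eqxx orbT.
  - by rewrite e eqxx orbT.
move=> p q pL qL e; apply: (tile_uniq tl _ pL qL (t := p.1)).
- by have [] := H1 p pL.
- by rewrite eqxx.
- by rewrite e eqxx.
Qed.

Lemma adj_mono d (u w : tri d) a b c : adjacent u w ->
  [&& a <= ea w, b <= eb w & c <= ec w] -> [&& a <= ea u, b <= eb u & c <= ec u].
Proof.
move=> /and5P [_ _ _ _ /or3P [/and3P [/eqP -> /eqP -> /eqP ->]
  | /and3P [/eqP -> /eqP -> /eqP ->] | /and3P [/eqP -> /eqP -> /eqP ->]]]
  /and3P [h1 h2 h3]; apply/and3P; split; lia.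
Qed.

Lemma cross d (T : {set tri d}) (L : {set lozenge d}) a b c :
  tiling T L -> tileable (monomial_subregion T a b c) ->
  forall p, p \in L ->
    (p.1 \in monomial_subregion T a b c) = (p.2 \in monomial_subregion T a b c).
Proof.
set U := monomial_subregion T a b c.
move=> tl [L2 tl2].
have [H1 _] := tl.
have up_of_down : forall p, p \in L -> p.2 \in U -> p.1 \in U.
  move=> p pL; have [a1 a2 _] := H1 p pL.
  rewrite !inE a2 /= => /andP [_ h]; exact: adj_mono a1 h.
pose M := [set p in L | p.2 \in U].
have cM2 : #|(fun p : lozenge d => p.2) @: M| = #|M|.
  apply: card_in_imset => p q; rewrite !inE => /andP [pL pU] /andP [qL _] e.
  apply: (tile_uniq tl _ pL qL (t := p.2)).
  - by have [] := H1 p pL.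
  - by rewrite eqxx orbT.
  - by rewrite e eqxx orbT.
have cM1 : #|(fun p : lozenge d => p.1) @: M| = #|M|.
  apply: card_in_imset => p q; rewrite !inE => /andP [pL pU] /andP [qL _] e.
  apply: (tile_uniq tl _ pL qL (t := p.1)).
  - by have [] := H1 p pL.
  - by rewrite eqxx.
  - by rewrite e eqxx.
have e2 : (fun p : lozenge d => p.2) @: M = [set t in U | ~~ t.1].
  apply/setP => t; rewrite inE; apply/imsetP/idP.
    move=> [p]; rewrite inE => /andP [pL pU] ->.
    by rewrite pU (adj_dir (and3_1 (H1 p pL))).2.
  move=> /andP [tU t1].
  have tT : t \in T by move: tU; rewrite inE => /andP [].
  have [p pL hp] := tile_ex tl tT.
  have e : p.2 = t.
    case/orP: hp => /eqP e //.
    by move: t1; rewrite -e (adj_dir (and3_1 (H1 p pL))).1.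
  by exists p => //; rewrite inE pL e tU.
have sub1 : (fun p : lozenge d => p.1) @: M \subset [set t in U | t.1].
  apply/subsetP => t /imsetP [p]; rewrite inE => /andP [pL pU] ->.
  by rewrite inE up_of_down // (adj_dir (and3_1 (H1 p pL))).1.
have ceq : #|(fun p : lozenge d => p.1) @: M| = #|[set t in U | t.1]|.
  by rewrite cM1 -cM2 e2 (count_eq tl2).
have /subset_cardP := ceq => /(_ sub1) eqs.
move=> p pL; apply/idP/idP; last exact: up_of_down.
move=> pU.
have : p.1 \in [set t in U | t.1] by rewrite inE pU (adj_dir (and3_1 (H1 p pL))).1.
rewrite -eqs => /imsetP [q]; rewrite inE => /andP [qL qU] e.
have pT : p.1 \in T by have [] := H1 p pL.
have hp : (p.1 == p.1) || (p.2 == p.1) by rewrite eqxx.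
have hq : (q.1 == p.1) || (q.2 == p.1) by rewrite e eqxx.
by rewrite (tile_uniq tl pT pL qL hp hq).
Qed.

Lemma split_tiling d (T : {set tri d}) (L : {set lozenge d}) a b c :
  tiling T L -> tileable (monomial_subregion T a b c) ->
  exists L1 L2 : {set lozenge d},
       [/\ tiling (T :\: monomial_subregion T a b c) L1,
           tiling (monomial_subregion T a b c) L2 &
           L = L1 :|: L2].
Proof.
set U := monomial_subregion T a b c.
move=> tl tU.
have cr := cross tl tU; rewrite -/U in cr.
have [H1 H2] := tl.
have UT : U \subset T by apply/subsetP => t; rewrite inE => /andP [].
clearbody U.
exists [set p in L | p.1 \notin U], [set p in L | p.1 \in U]; split.
- split.
    move=> p; rewrite inE => /andP [pL pU]; have [a1 a2 a3] := H1 p pL.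
    by rewrite !in_setD -(cr p pL) pU a1 a2 a3.
  move=> t; rewrite inE => /andP [tnU tT]; rewrite -(H2 t tT).
  congr #|pred_of_set _|; apply/setP => p; rewrite !inE.
  case pL: (p \in L) => //=; case/orP: (orbN ((p.1 == t) || (p.2 == t))) => h.
    rewrite h andbT; case/orP: h => /eqP e; first by rewrite e.
    by rewrite (cr p pL) e.
  by rewrite (negbTE h) andbF.
- split.
    move=> p; rewrite inE => /andP [pL pU]; have [a1 _ _] := H1 p pL.
    by rewrite a1 pU -(cr p pL) pU.
  move=> t tiU; have tT := subsetP UT t tiU; rewrite -(H2 t tT).
  congr #|pred_of_set _|; apply/setP => p; rewrite !inE.
  case pL: (p \in L) => //=; case/orP: (orbN ((p.1 == t) || (p.2 == t))) => h.
    rewrite h andbT; case/orP: h => /eqP e; first by rewrite e.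
    by rewrite (cr p pL) e.
  by rewrite (negbTE h) andbF.
- apply/setP => p; rewrite !inE; by case: (p \in L); case: (p.1 \in U).
Qed.

Theorem lemma2p1 (d : nat) (T : {set tri d}) (a b c : nat) :
  0 < d -> T \subset Td d -> a + b + c < d ->
  tileable (monomial_subregion T a b c) ->
  (tileable T <-> tileable (T :\: monomial_subregion T a b c)) /\
  (forall L : {set lozenge d}, tiling T L ->
     exists L1 L2 : {set lozenge d},
       [/\ tiling (T :\: monomial_subregion T a b c) L1,
           tiling (monomial_subregion T a b c) L2 &
           L = L1 :|: L2]).
Proof.
move=> _ _ _ tU; split; last by move=> L tl; exact: split_tiling.
set U := monomial_subregion T a b c.
have UT : U \subset T by apply/subsetP => t; rewrite inE => /andP [].
split.
  by move=> [L tl]; have [L1 [L2 [t1 _ _]]] := split_tiling tl tU; exists L1.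
rewrite -/U in tU.
clearbody U.
move=> [L1 [A1 B1]]; have [L2 [A2 B2]] := tU.
exists (L1 :|: L2); split.
  move=> p; rewrite inE => /orP [pL|pL].
    by have [x y z] := A1 p pL; move: y z; rewrite !in_setD => /andP [_ ->] /andP [_ ->].
  by have [x y z] := A2 p pL; rewrite x (subsetP UT _ y) (subsetP UT _ z).
move=> t tT; case tUU: (t \in U).
  rewrite -(B2 t tUU); congr #|pred_of_set _|; apply/setP => p; rewrite !inE.
  case pL1: (p \in L1) => /=; last done.
  have [_ y z] := A1 p pL1; rewrite !in_setD in y z.
  case/andP: y => y _; case/andP: z => z _.
  have hf : ((p.1 == t) || (p.2 == t)) = false.
    by apply/negbTE/negP => /orP [] /eqP e; [move: y|move: z]; rewrite e tUU.
  by rewrite hf andbF.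
have tD : t \in T :\: U by rewrite in_setD tUU tT.
rewrite -(B1 t tD); congr #|pred_of_set _|; apply/setP => p; rewrite !inE.
case pL2: (p \in L2) => /=; last by rewrite orbF.
have [_ y z] := A2 p pL2.
have hf : ((p.1 == t) || (p.2 == t)) = false.
  by apply/negbTE/negP => /orP [] /eqP e; [move: y|move: z]; rewrite e tUU.
by rewrite hf !andbF.
Qed.
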